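(* Let $\alpha,\beta,\gamma$ be partitions with $\alpha_1\le 2$ and let $\Gamma$ be an LR-tableau of type $(\alpha,\beta,\gamma)$; let $x$ be the number of entries $1$ in $\Gamma$. Assume: (1) the number of entries $2$ in $\Gamma$ equals $x$ or $x-1$; (2) every row of $\Gamma$ contains at most one (non-empty) box; (3) if row $j$ contains an entry $2$ and row $i$ contains an entry $1$, then $j>i$. Then the poset $(\mathcal D_\Gamma,\le_{\rm arc})$ is isomorphic to the symmetric group $S_x$ with the Bruhat order.
   Context: For a partition $\lambda$, $\lambda'$ is its conjugate; the diagram of $\lambda$ is drawn with $\lambda'_i$ boxes in row $i$, so the $i$-th row of $\beta\setminus\gamma$ consists of the boxes in columns $\gamma'_i+1,\dots,\beta'_i$. With $\alpha_1\le2$, $\alpha'=(\alpha'_1,\alpha'_2)$. An LR-tableau of type $(\alpha,\beta,\gamma)$ is a filling of $\beta\setminus\gamma$ with $\alpha'_1$ entries $1$ and $\alpha'_2$ entries $2$, weakly increasing along rows, strictly increasing down columns, such that for each $c\ge0$ the number of entries $1$ in columns to the right of column $c$ is at least the number of entries $2$ there. Place the positive integers on a line in decreasing order from left to right. An arc is a pair $(m,n)$, $m>n$ positive integers (source $m$, target $n$); a pole at $n$ is regarded as an arc $(\infty,n)$. An arc diagram of type $(\alpha,\beta,\gamma)$ is a finite multiset of $\alpha'_2$ arcs and $\alpha'_1-\alpha'_2$ poles with, for each $i$, exactly $\beta'_i-\gamma'_i$ members having source or target $i$. It has LR type $\Gamma$ if for each $i$ the number of arcs with source $i$ equals the number of entries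 $2$ in row $i$ of $\Gamma$; $\mathcal D_\Gamma$ is the set of such diagrams. Moves: for $a>b>c>d$, (A) replaces arcs $(a,c),(b,d)$ by $(a,d),(b,c)$; (C) replaces them by $(a,b),(c,d)$; for $a>b>c$, (B) replaces arc $(a,c)$ and pole $(\infty,b)$ by arc $(a,b)$ and pole $(\infty,c)$; (D) replaces them by arc $(b,c)$ and pole $(\infty,a)$; other members unchanged. $\Delta\le_{\rm arc}\Delta'$ iff $\Delta$ is obtained from $\Delta'$ by a finite (possibly empty) sequence of moves; $\mathcal D_\Gamma$ carries the restricted order. *)

(* Defs.v *)
From mathcomp Require Import all_boot all_order all_fingroup.
From Stdlib Require Import Relation_Operators.

Set Implicit Arguments.
Unset Strict Implicit.
Unset Printing Implicit Defensive.

Definition is_partition (l : seq nat) : bool :=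
  sorted geq l && all (fun p => 0 < p) l.

(* conj l i = l'_i, the i-th part (1-indexed, i >= 1) of the conjugate. *)
Definition conj (l : seq nat) (i : nat) : nat := count (fun p => i <= p) l.

Definition subpart (gamma beta : seq nat) : Prop :=
  forall i, 1 <= i -> conj gamma i <= conj beta i.

(* Row i (i >= 1) of beta \ gamma consists of the boxes in columns
   gamma'_i + 1, ..., beta'_i. *)
Definition in_skew (beta gamma : seq nat) (i c : nat) : bool :=
  (1 <= i) && (conj gamma i < c) && (c <= conj beta i).

(* A filling is a function (row, column) -> entry; only its values on the
   boxes of beta \ gamma matter. *)
Definition filling := nat -> nat -> nat.

Definition row_count (beta gamma : seq nat) (T : filling) (e i : nat) : nat :=
  \sum_((conj gamma i).+1 <= c < (conj beta i).+1) (T i c == e).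

(* total number of entries e (rows beyond beta_1 = head beta are empty) *)
Definition tab_count (beta gamma : seq nat) (T : filling) (e : nat) : nat :=
  \sum_(1 <= i < (head 0 beta).+1) row_count beta gamma T e i.

Definition col_count (beta gamma : seq nat) (T : filling) (e c0 : nat) : nat :=
  \sum_(1 <= i < (head 0 beta).+1)
     \sum_((conj gamma i).+1 <= c < (conj beta i).+1 | c0 < c) (T i c == e).

(* LR-tableau of type (alpha, beta, gamma), alpha_1 <= 2, so that
   alpha' = (conj alpha 1, conj alpha 2). *)
Definition is_LR_tableau (alpha beta gamma : seq nat) (T : filling) : Prop :=
  [/\ subpart gamma beta,
      (forall i c, in_skew beta gamma i c -> T i c \in [:: 1; 2]),
      tab_count beta gamma T 1 = conj alpha 1,
      tab_count beta gamma T 2 = conj alpha 2 &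
      [/\ (forall i c c', in_skew beta gamma i c -> in_skew beta gamma i c' ->
            c <= c' -> T i c <= T i c'),
          (forall i i' c, in_skew beta gamma i c -> in_skew beta gamma i' c ->
            i < i' -> T i c < T i' c) &
          (forall c0, col_count beta gamma T 2 c0 <= col_count beta gamma T 1 c0)]].

(* (Some m, n) is the arc (m, n); (None, n) is the pole (oo, n). *)
Definition arcm := (option nat * nat)%type.

Definition valid_arc (a : arcm) : bool :=
  match a with
  | (Some m, n) => (0 < n) && (n < m)
  | (None, n) => 0 < n
  end.

Definition is_arc (a : arcm) : bool := a.1 != None.
Definition is_pole (a : arcm) : bool := a.1 == None.

Definition touches (i : nat) (a : arcm) : bool := (a.1 == Some i) || (a.2 == i).

(* A finite multiset of arcs, represented by a sequence up to permutation. *)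
Definition arc_diagram_of_type (alpha beta gamma : seq nat) (D : seq arcm) : Prop :=
  [/\ all valid_arc D,
      count is_arc D = conj alpha 2,
      count is_pole D = conj alpha 1 - conj alpha 2 &
      (forall i, 1 <= i -> count (touches i) D = conj beta i - conj gamma i)].

Definition has_LR_type (beta gamma : seq nat) (T : filling) (D : seq arcm) : Prop :=
  forall i, 1 <= i -> count (fun a => a.1 == Some i) D = row_count beta gamma T 2 i.

Definition in_DGamma (alpha beta gamma : seq nat) (T : filling) (D : seq arcm) : Prop :=
  arc_diagram_of_type alpha beta gamma D /\ has_LR_type beta gamma T D.

Definition arc_move (D' D : seq arcm) : Prop :=
  (exists (a b c d : nat) (rest : seq arcm),
      [/\ d < c, c < b, b < a,
          perm_eq D' [:: (Some a, c), (Some b, d) & rest] &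
          (perm_eq D [:: (Some a, d), (Some b, c) & rest]          (* (A) *)
           \/ perm_eq D [:: (Some a, b), (Some c, d) & rest])])   (* (C) *)
  \/
  (exists (a b c : nat) (rest : seq arcm),
      [/\ c < b, b < a,
          perm_eq D' [:: (Some a, c), (None, b) & rest] &
          (perm_eq D [:: (Some a, b), (None, c) & rest]            (* (B) *)
           \/ perm_eq D [:: (Some b, c), (None, a) & rest])]).    (* (D) *)

Definition arc_le (D D' : seq arcm) : Prop :=
  clos_refl_trans (seq arcm) (fun u v => arc_move u v \/ perm_eq u v) D' D.

Definition ninv (n : nat) (s : 'S_n) : nat :=
  #|[set p : 'I_n * 'I_n | (p.1 < p.2) && (s p.2 < s p.1)]|.

Definition bruhat_step (n : nat) (s t : 'S_n) : Prop :=
  exists i j : 'I_n, t = (s * tperm i j)%g /\ ninv s < ninv t.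

Definition bruhat_le (n : nat) (s t : 'S_n) : Prop :=
  clos_refl_trans 'S_n (@bruhat_step n) s t.

(* Main.v *)
Require Import Defs.
From mathcomp Require Import all_boot all_order all_fingroup.
From mathcomp Require Import zify.
From Stdlib Require Import Relation_Operators.
Set Implicit Arguments. Unset Strict Implicit. Unset Printing Implicit Defensive.

Section Swap.
Variables (n : nat) (p q : 'I_n).
Hypothesis pq : (p < q)%N.

Definition sigsw (r k : 'I_n) : 'I_n := if (p < r < q)%N then k else tperm p q k.
Definition phi (e : 'I_n * 'I_n) := (sigsw e.2 e.1, sigsw e.1 e.2).

Lemma tpermNat (k : 'I_n) : nat_of_ord (tperm p q k) = if nat_of_ord k == nat_of_ord p then nat_of_ord q else if nat_of_ord k == nat_of_ord q then nat_of_ord p else nat_of_ord k.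
Proof.
have qp : (val q == val p) = false by apply/eqP => E; move: pq; rewrite E ltnn.
case: tpermP => [->|->|Hp Hq]; rewrite ?eqxx ?qp //.
by rewrite !val_eqE (introF eqP Hp) (introF eqP Hq).
Qed.

Definition nsig (r k : nat) : nat := if (p < r < q)%N then k else if k == nat_of_ord p then nat_of_ord q else if k == nat_of_ord q then nat_of_ord p else k.
Lemma sigV (r k : 'I_n) : nat_of_ord (sigsw r k) = nsig r k.
Proof. by rewrite /sigsw /nsig (fun_if (@nat_of_ord n)) tpermNat. Qed.

Lemma phiK : involutive phi.
Proof.
case=> a b; rewrite /phi /=.
apply/eqP; rewrite xpair_eqE -!val_eqE /= !sigV.
have := pq; rewrite /nsig.
repeat match goal with |- context [if ?c then _ else _] => lazymatch c with context [if _ then _ else _] => fail | _ => let E := fresh in case E: c end end; lia.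
Qed.

Lemma tpermO (z : 'I_n) : z <> p -> z <> q -> tperm p q z = z.
Proof. by move=> H1 H2; apply: tpermD; apply/eqP => E; [apply: H1|apply: H2]. Qed.

Lemma phi_inj : injective phi. Proof. exact: inv_inj phiK. Qed.

Definition invs (s : 'S_n) := [set e : 'I_n * 'I_n | (e.1 < e.2) && (s e.2 < s e.1)].

Lemma ninv_swap (s : 'S_n) : s p < s q -> ninv s < ninv (s * tperm (s p) (s q))%g.
Proof.
move=> spq.
set t := (s * _)%g.
have tE k : t k = s (tperm p q k).
  rewrite permM; case: (tpermP p q k) => [->|->|H1 H2]; rewrite ?tpermL ?tpermR //.
  by rewrite tpermD // (inj_eq perm_inj) eq_sym; apply/eqP.
have -> : ninv s = #|phi @: invs s| by rewrite card_imset //; exact: phi_inj.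
have: phi @: invs s \subset invs t :\ (p, q).
  apply/subsetP => e /imsetP [[a b] + ->]; rewrite !inE /= => /andP [ab sab].
  rewrite !tE xpair_eqE /phi /sigsw /=.
  have pq' : (nat_of_ord p != nat_of_ord q) by rewrite neq_ltn pq.
  case: (tpermP p q a) => [Ea|Ea|Ha1 Ha2]; case: (tpermP p q b) => [Eb|Eb|Hb1 Hb2]; subst;
  rewrite ?ltnn ?andbF ?andFb /= ?if_same;
  repeat match goal with |- context [if ?c then _ else _] => let E := fresh in case E: c end;
  rewrite ?tpermL ?tpermR ?tpermO //;
  try (apply/eqP; congruence);
  rewrite -?val_eqE /=;
  repeat match goal with H : ?x <> ?y |- _ => move/eqP: H; rewrite -val_eqE /= => H end;
  lia.

move/subset_leq_card => H; apply: (leq_ltn_trans H).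
rewrite /ninv -/(invs t) [#|invs t|](cardsD1 (p, q)) inE /= pq !tE tpermL tpermR spq.
done.
Qed.
End Swap.


Section Arcs.
Variables (x BIG : nat) (S : seq (option nat)) (L1 : seq nat).
Definition sk (o : option nat) := if o is Some m then m else BIG.
Hypothesis HS : size S = x.
Hypothesis HL : size L1 = x.
Hypothesis HL1 : sorted ltn L1.
Hypothesis HS1 : sorted gtn (map sk S).
Hypothesis Hsrc : forall m, Some m \in S -> forall n, n \in L1 -> n < m.
Hypothesis Hbig : forall m, Some m \in S -> m < BIG.

Definition g (u : 'S_x) (k : 'I_x) : arcm := (nth None S k, nth 0 L1 (u k)).
Definition f (u : 'S_x) : seq arcm := [seq g u k | k <- enum 'I_x].
Definition rest (u : 'S_x) (p q : 'I_x) : seq arcm :=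
  [seq g u k | k <- enum 'I_x & (k != p) && (k != q)].

Lemma L1_lt (i j : nat) : i < x -> j < x -> (nth 0 L1 i < nth 0 L1 j) = (i < j).
Proof.
move=> ix jx.
have H : forall i j, i < x -> j < x -> i < j -> nth 0 L1 i < nth 0 L1 j.
  move=> i' j' ix' jx' ij; apply: (sorted_ltn_nth ltn_trans) => //; rewrite inE HL //.
case: (ltngtP i j) => ij; first by rewrite H.
- by apply/negbTE; rewrite -leqNgt ltnW // H.
- by subst; rewrite ltnn.
Qed.

Lemma L1_inj (i j : nat) : i < x -> j < x -> nth 0 L1 i = nth 0 L1 j -> i = j.
Proof.
move=> ix jx E; case: (ltngtP i j) => // ij.
- by move: (L1_lt ix jx); rewrite E ltnn ij.
- by move: (L1_lt jx ix); rewrite E ltnn ij.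
Qed.

Lemma S_lt (i j : nat) : i < x -> j < x -> (sk (nth None S j) < sk (nth None S i)) = (i < j).
Proof.
move=> ix jx.
have E k : k < x -> sk (nth None S k) = nth (sk None) (map sk S) k by move=> kx; rewrite (nth_map None) // HS.
have H : forall i j, i < x -> j < x -> i < j -> sk (nth None S j) < sk (nth None S i).
  move=> i' j' ix' jx' ij; rewrite !E //.
  apply: (sorted_ltn_nth (leT := gtn) _ (sk None) HS1) => //; rewrite ?inE ?size_map ?HS //.
  by move=> a b c /= ba cb; apply: ltn_trans ba.
case: (ltngtP i j) => ij; first by rewrite H.
- by apply/negbTE; rewrite -leqNgt ltnW // H.
- by subst; rewrite ltnn.
Qed.

Lemma S_inj (i j : nat) : i < x -> j < x -> nth None S i = nth None S j -> i = j.
Proof.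
move=> ix jx E; case: (ltngtP i j) => // ij.
- by move: (S_lt ix jx); rewrite E ltnn ij.
- by move: (S_lt jx ix); rewrite E ltnn ij.
Qed.

Lemma f_split (u : 'S_x) (p q : 'I_x) : p != q -> perm_eq (f u) [:: g u p, g u q & rest u p q].
Proof.
move=> pq; rewrite /f /rest -(map_cons (g u) q) -(map_cons (g u) p).
apply: perm_map; apply: uniq_perm.
- exact: enum_uniq.
- rewrite /= filter_uniq ?enum_uniq // mem_filter !inE eqxx andbF andFb /=.
  by rewrite mem_filter eqxx andFb (negbTE pq).
- move=> k; rewrite mem_enum !inE mem_filter mem_enum inE.
  by case: (k =P p); case: (k =P q).
Qed.

Lemma swapE (u : 'S_x) (p q k : 'I_x) : (u * tperm (u p) (u q))%g k = u (tperm p q k).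
Proof.
rewrite permM; case: (tpermP p q k) => [->|->|H1 H2]; rewrite ?tpermL ?tpermR //.
by rewrite tpermD // (inj_eq perm_inj) eq_sym; apply/eqP.
Qed.

Lemma rest_swap (u : 'S_x) (p q : 'I_x) : rest (u * tperm (u p) (u q))%g p q = rest u p q.
Proof.
apply/eq_in_map => k; rewrite mem_filter => /andP [/andP [kp kq] _].
rewrite /g swapE tpermD //.
- by apply/negP => /eqP E; move: kp; rewrite E eqxx.
- by apply/negP => /eqP E; move: kq; rewrite E eqxx.
Qed.

Lemma g_swapl (u : 'S_x) (p q : 'I_x) : g (u * tperm (u p) (u q))%g p = (nth None S p, nth 0 L1 (u q)).
Proof. by rewrite /g swapE tpermL. Qed.
Lemma g_swapr (u : 'S_x) (p q : 'I_x) : g (u * tperm (u p) (u q))%g q = (nth None S q, nth 0 L1 (u p)).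
Proof. by rewrite /g swapE tpermR. Qed.

Lemma f_inj (s u : 'S_x) : perm_eq (f s) (f u) -> s = u.
Proof.
move=> H; apply/permP => k.
have : g s k \in f u by rewrite -(perm_mem H); apply: map_f; rewrite mem_enum.
case/mapP => k' _ [E1 E2].
have kk : k = k' by apply: val_inj; apply: S_inj (ltn_ord _) (ltn_ord _) _.
subst k'; apply: val_inj; exact: L1_inj (ltn_ord _) (ltn_ord _) _.
Qed.

Lemma perm_swap2 (a b : arcm) r : perm_eq [:: a, b & r] [:: b, a & r].
Proof. by apply/permPl; exact: (perm_catCA [:: a] [:: b] r). Qed.

Lemma move_fwd (u : 'S_x) (p q : 'I_x) : p < q -> u q < u p ->
  arc_move (f u) (f (u * tperm (u p) (u q))%g).
Proof.
move=> pq upq.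
have pq' : p != q by rewrite neq_ltn pq.
have E1 := f_split u pq'.
have E2 := f_split (u * tperm (u p) (u q))%g pq'.
rewrite rest_swap g_swapl g_swapr in E2.
move: E1 E2; rewrite /g.
have skpq : sk (nth None S q) < sk (nth None S p) by rewrite S_lt.
have dc : nth 0 L1 (u q) < nth 0 L1 (u p) by rewrite L1_lt.
have cin : nth 0 L1 (u p) \in L1 by rewrite mem_nth // HL.
have din : nth 0 L1 (u q) \in L1 by rewrite mem_nth // HL.
have qin : nth None S q \in S by rewrite mem_nth // HS.
have pin : nth None S p \in S by rewrite mem_nth // HS.
move: skpq qin pin.
case: (nth None S p) => [A|]; case: (nth None S q) => [B|] //= BA Bin Ain E1 E2.
- left; exists A, B, (nth 0 L1 (u p)), (nth 0 L1 (u q)), (rest u p q); split => //.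
  + exact: Hsrc.
  + by left.
- by move: (Hbig Ain); rewrite ltnNge ltnW.
- right; exists B, (nth 0 L1 (u p)), (nth 0 L1 (u q)), (rest u p q); split => //.
  + exact: Hsrc.
  + by rewrite (permPl E1) perm_swap2.
  + by left; rewrite (permPl E2) perm_swap2.
- by rewrite ltnn in BA.
Qed.

Lemma in_f (u : 'S_x) a : a \in f u -> exists k, a = g u k.
Proof. by case/mapP => k _ ->; exists k. Qed.

Lemma move_core (u : 'S_x) (p q : 'I_x) (D D' r : seq arcm) : p < q ->
  perm_eq D [:: g u p, g u q & r] ->
  perm_eq D' [:: (nth None S p, nth 0 L1 (u q)), (nth None S q, nth 0 L1 (u p)) & r] ->
  perm_eq D (f u) -> perm_eq D' (f (u * tperm (u p) (u q))%g).
Proof.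
move=> pq E1 E2 E3.
have pq' : p != q by rewrite neq_ltn pq.
have F1 := f_split u pq'.
have F2 := f_split (u * tperm (u p) (u q))%g pq'.
rewrite rest_swap g_swapl g_swapr in F2.
have : perm_eq [:: g u p, g u q & r] [:: g u p, g u q & rest u p q].
  by rewrite -(permPl E1) (permPl E3).
rewrite !perm_cons => Er.
rewrite (permPl E2) (permPr F2) !perm_cons //.
Qed.

Lemma move_bwdA (u : 'S_x) (D D' r : seq arcm) a b c d : d < c -> c < b -> b < a ->
  perm_eq D (f u) -> perm_eq D [:: (Some a, c), (Some b, d) & r] ->
  perm_eq D' [:: (Some a, d), (Some b, c) & r] ->
  exists p q : 'I_x, [/\ p < q, u q < u p & perm_eq D' (f (u * tperm (u p) (u q))%g)].
Proof.
move=> dc cb ba E0 E1 E2.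
have [p Ep] : exists p, (Some a, c) = g u p.
  by apply: in_f; rewrite -(perm_mem E0) (perm_mem E1) inE eqxx.
have [q Eq] : exists q, (Some b, d) = g u q.
  by apply: in_f; rewrite -(perm_mem E0) (perm_mem E1) !inE eqxx orbT.
case: Ep => Sp Lp; case: Eq => Sq Lq.
have pq : p < q by rewrite -S_lt // -Sp -Sq.
have uqp : u q < u p by rewrite -L1_lt // -Lp -Lq.
exists p, q; split => //.
apply: (move_core (r := r) pq _ _ E0); first by rewrite /g -Sp -Lp -Sq -Lq.
by rewrite -Sp -Lp -Sq -Lq.
Qed.

Lemma move_bwdB (u : 'S_x) (D D' r : seq arcm) a b c : c < b -> b < a ->
  perm_eq D (f u) -> perm_eq D [:: (Some a, c), (None, b) & r] ->
  perm_eq D' [:: (Some a, b), (None, c) & r] ->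
  exists p q : 'I_x, [/\ p < q, u q < u p & perm_eq D' (f (u * tperm (u p) (u q))%g)].
Proof.
move=> cb ba E0 E1 E2.
have [p Ep] : exists p, (None, b) = g u p.
  by apply: in_f; rewrite -(perm_mem E0) (perm_mem E1) !inE eqxx orbT.
have [q Eq] : exists q, (Some a, c) = g u q.
  by apply: in_f; rewrite -(perm_mem E0) (perm_mem E1) inE eqxx.
case: Ep => Sp Lp; case: Eq => Sq Lq.
have aS : Some a \in S by rewrite Sq mem_nth // HS.
have pq : p < q by rewrite -S_lt // -Sp -Sq /= Hbig.
have uqp : u q < u p by rewrite -L1_lt // -Lp -Lq.
exists p, q; split => //.
apply: (move_core (r := r) pq _ _ E0).
  by rewrite /g -Sp -Lp -Sq -Lq (permPl E1) perm_swap2.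
by rewrite -Sp -Lp -Sq -Lq (permPl E2) perm_swap2.
Qed.

Definition mu (D : seq arcm) := sumn [seq (if a.1 is Some m then m else 0) | a <- D].

Lemma mu_perm D D' : perm_eq D D' -> mu D = mu D'.
Proof. by move=> E; apply: perm_sumn; apply: perm_map. Qed.

Lemma mu_f (u v : 'S_x) : mu (f u) = mu (f v).
Proof. by rewrite /mu /f -!map_comp. Qed.

Lemma bstep_swap (u : 'S_x) (p q : 'I_x) : p < q -> u q < u p ->
  bruhat_step (u * tperm (u p) (u q))%g u.
Proof.
move=> pq uqp; set u' := (u * _)%g.
have E : u = (u' * tperm (u q) (u p))%g.
  by apply/permP => k; rewrite !permM tpermC tpermK.
exists (u q), (u p); split; first exact: E.
have := ninv_swap pq (s := u'); rewrite /u' !swapE tpermL tpermR -/u' => H.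
by rewrite [X in _ < ninv X]E; apply: H.
Qed.

Lemma key_step (s t : 'S_x) (P Q : 'I_x) : P < Q -> t = (s * tperm (s P) (s Q))%g ->
  ninv s < ninv t -> arc_move (f t) (f s).
Proof.
move=> PQ Et Hn.
have tP : t P = s Q by rewrite Et swapE tpermL.
have tQ : t Q = s P by rewrite Et swapE tpermR.
have Es : s = (t * tperm (t P) (t Q))%g.
  by apply/permP => k; rewrite swapE Et swapE tpermK.
have PQ' : P != Q by rewrite neq_ltn PQ.
have sPQ : s P != s Q by rewrite (inj_eq perm_inj).
case: (ltngtP (s P) (s Q)) => H.
- rewrite [X in arc_move _ (f X)]Es; apply: move_fwd => //; rewrite tP tQ //.
- have := ninv_swap PQ (s := t); rewrite -Es tP tQ => /(_ H) H'.
  by move: (ltn_trans Hn H'); rewrite ltnn.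
- by move/val_inj: H => H; rewrite H eqxx in sPQ.
Qed.

Lemma bstep_move (s t : 'S_x) : bruhat_step s t -> arc_move (f t) (f s).
Proof.
move=> [i [j [Et Hn]]].
set P := (s^-1)%g i; set Q := (s^-1)%g j.
have sP : s P = i by rewrite permKV.
have sQ : s Q = j by rewrite permKV.
case: (ltngtP P Q) => H.
- by apply: (key_step (s := s) (t := t) H _ Hn); rewrite sP sQ.
- by apply: (key_step (s := s) (t := t) H _ Hn); rewrite sP sQ tpermC.
- have ij : i = j by rewrite -sP -sQ (val_inj H).
  by move: Hn; rewrite Et ij tperm1 mulg1 ltnn.
Qed.

Definition Rarc (u v : seq arcm) := arc_move u v \/ perm_eq u v.

Lemma bruhat_to_arc (s t : 'S_x) : bruhat_le s t -> arc_le (f s) (f t).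
Proof.
rewrite /bruhat_le /arc_le; elim => {s t}.
- by move=> s t H; apply: rt_step; left; apply: bstep_move.
- by move=> s; apply: rt_refl.
- by move=> s u t _ H1 _ H2; apply: rt_trans H2 H1.
Qed.

Lemma arc_to_bruhat (s t : 'S_x) : arc_le (f s) (f t) -> bruhat_le s t.
Proof.
rewrite /arc_le => H.
set M := mu (f t).
pose Inv D := mu D <= M /\ (mu D = M -> exists u, perm_eq D (f u) /\ bruhat_le u t).
have step : forall D1 D2, Rarc D1 D2 -> Inv D1 -> Inv D2.
  move=> D1 D2 [] .
  - case.
    + move=> [a [b [c [d [r [dc cb ba E1 [EA|EC]]]]]]] [H1 H2].
      * have m1 := mu_perm E1; have m2 := mu_perm EA.
        have e : mu D2 = mu D1 by rewrite m1 m2.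
        split; first by rewrite e.
        move=> m; case: (H2 ltac:(by rewrite -e)) => u [E0 Hu].
        have [p [q [pq uqp E]]] := move_bwdA dc cb ba E0 E1 EA.
        exists (u * tperm (u p) (u q))%g; split => //.
        apply: rt_trans Hu; apply: rt_step; exact: bstep_swap.
      * have m1 := mu_perm E1; have m2 := mu_perm EC.
        have e : mu D2 < mu D1 by rewrite m1 m2 /mu /=; lia.
        split; first by apply: leq_trans (ltnW e) H1.
        by move=> m; move: (leq_trans e H1); rewrite m ltnn.
    + move=> [a [b [c [r [cb ba E1 [EB|ED]]]]]] [H1 H2].
      * have m1 := mu_perm E1; have m2 := mu_perm EB.
        have e : mu D2 = mu D1 by rewrite m1 m2.
        split; first by rewrite e.
        move=> m; case: (H2 ltac:(by rewrite -e)) => u [E0 Hu].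
        have [p [q [pq uqp E]]] := move_bwdB cb ba E0 E1 EB.
        exists (u * tperm (u p) (u q))%g; split => //.
        apply: rt_trans Hu; apply: rt_step; exact: bstep_swap.
      * have m1 := mu_perm E1; have m2 := mu_perm ED.
        have e : mu D2 < mu D1 by rewrite m1 m2 /mu /=; lia.
        split; first by apply: leq_trans (ltnW e) H1.
        by move=> m; move: (leq_trans e H1); rewrite m ltnn.
  - move=> E [H1 H2]; have e := mu_perm E.
    split; first by rewrite -e.
    move=> m; case: (H2 ltac:(by rewrite e)) => u [E0 Hu].
    by exists u; split => //; rewrite -(permPl E).
have inv : forall D1 D2, clos_refl_trans (seq arcm) Rarc D1 D2 -> Inv D1 -> Inv D2.
  move=> D1 D2; elim => {D1 D2}.
  - by move=> D1 D2 HR; apply: step.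
  - by [].
  - by move=> D1 D2 D3 _ IH1 _ IH2 I1; apply: IH2; apply: IH1.
have It : Inv (f t) by split => // _; exists t; split => //; apply: rt_refl.
case: (inv _ _ H It) => _ /(_ (mu_f s t)) [u [E Hu]].
by rewrite (f_inj E).
Qed.

Lemma le_iff (s t : 'S_x) : arc_le (f s) (f t) <-> bruhat_le s t.
Proof. by split; [apply: arc_to_bruhat | apply: bruhat_to_arc]. Qed.
End Arcs.


Lemma sum_bool_count (r : seq nat) (P : pred nat) : \sum_(i <- r) (P i : nat) = count P r.
Proof. by elim: r => [|a r IH]; rewrite ?big_nil ?big_cons ?IH. Qed.

Lemma count_le1_eq (T : eqType) (P : pred T) (D : seq T) a b :
  count P D <= 1 -> a \in D -> b \in D -> P a -> P b -> a = b.
Proof.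
elim: D => [|c D IH] //= H; rewrite !inE => /orP [/eqP ->|aD] /orP [/eqP ->|bD] Pa Pb //.
- have : 0 < count P D by rewrite -has_count; apply/hasP; exists b.
  by move: H; rewrite Pa; lia.
- have : 0 < count P D by rewrite -has_count; apply/hasP; exists a.
  by move: H; rewrite Pb; lia.
- by apply: IH => //; move: H; lia.
Qed.

Lemma uniq_from_count (D : seq arcm) : (forall n, count (fun a => a.2 == n) D <= 1) -> uniq D.
Proof.
elim: D => [|c D IH] //= H; apply/andP; split.
- apply/negP => cD; move: (H c.2) => /=; rewrite eqxx add1n ltnS leqn0 => /eqP H0.
  have : 0 < count (fun a : option nat * nat => a.2 == c.2) D by rewrite -has_count; apply/hasP; exists c.
  by rewrite H0.
- by apply: IH => n; move: (H n) => /=; lia.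
Qed.

Section Concrete.
Variables (alpha beta gamma : seq nat) (T : filling).
Hypothesis Hb : is_partition beta.
Hypothesis HLR : is_LR_tableau alpha beta gamma T.
Hypothesis H1 : tab_count beta gamma T 2 = tab_count beta gamma T 1 \/
   (tab_count beta gamma T 2).+1 = tab_count beta gamma T 1.
Hypothesis H2 : forall i, 1 <= i -> conj beta i - conj gamma i <= 1.
Hypothesis H3 : forall i j, 0 < row_count beta gamma T 2 j -> 0 < row_count beta gamma T 1 i -> i < j.

Definition box i := conj gamma i < conj beta i.
Definition Pe (e i : nat) := box i && (T i (conj beta i) == e).
Definition N := head 0 beta.
Definition Lrow e := [seq i <- iota 1 N | Pe e i].
Definition x := tab_count beta gamma T 1.
Definition y := tab_count beta gamma T 2.
Definition L1 := Lrow 1.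
Definition L2 := Lrow 2.
Definition S := nseq (x - y) None ++ rev (map Some L2).
Definition BIG := N.+1.

Lemma rcE e i : 1 <= i -> row_count beta gamma T e i = Pe e i.
Proof.
move=> i1; rewrite /row_count /Pe /box.
have Hd := H2 i1.
case: ltnP => H.
- have -> : conj beta i = (conj gamma i).+1 by lia.
  by rewrite big_nat1.
- by rewrite big_geq.
Qed.

Lemma tcE e : tab_count beta gamma T e = size (Lrow e).
Proof.
rewrite /tab_count (eq_big_nat _ _ (F2 := fun i => (Pe e i : nat))); last first.
  by move=> i /andP [i1 _]; rewrite rcE.
by rewrite /Lrow size_filter -sum_bool_count /index_iota subSS subn0.
Qed.

Lemma boxN i : box i -> i <= N.
Proof.
rewrite /box => H.
have : 0 < conj beta i by lia.
rewrite /conj -has_count => /hasP [p pb ip].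
case/andP: Hb => srt _.
move: pb srt; rewrite /N; case: beta => [//|h t] /=.
rewrite inE => /orP [/eqP <- //|pt] srt.
have := order_path_min (leT := geq) _ srt.
move=> /(_ ltac:(move=> a b c /= ba cb; exact: leq_trans cb ba)) /allP /(_ p pt) /= ph.
exact: leq_trans ip ph.
Qed.

Lemma entry i : 1 <= i -> box i -> (T i (conj beta i) == 1) || (T i (conj beta i) == 2).
Proof.
move=> i1; rewrite /box => bi; case: HLR => _ H _ _ _.
have := H i (conj beta i); rewrite /in_skew i1 bi leqnn /= => /(_ isT).
by rewrite !inE.
Qed.

Lemma memL e i : 1 <= i -> (i \in Lrow e) = Pe e i.
Proof.
move=> i1; rewrite /Lrow mem_filter mem_iota.
case P: (Pe e i) => //=.
have : i <= N by apply: boxN; case/andP: P.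
lia.
Qed.

Lemma Lrow_pos e i : i \in Lrow e -> 1 <= i.
Proof. by rewrite /Lrow mem_filter mem_iota => /andP [_ /andP []]. Qed.

Lemma Lrow_N e i : i \in Lrow e -> i <= N.
Proof. by rewrite /Lrow mem_filter mem_iota => /andP [_ /andP [_]]; rewrite add1n ltnS. Qed.

Lemma Lrow_sorted e : sorted ltn (Lrow e).
Proof. apply: sorted_filter; [exact: ltn_trans | exact: iota_ltn_sorted]. Qed.

Lemma Lrow_uniq e : uniq (Lrow e).
Proof. by rewrite /Lrow filter_uniq // iota_uniq. Qed.

Lemma sizeL1 : size L1 = x.
Proof. by rewrite /x tcE. Qed.
Lemma sizeL2 : size L2 = y.
Proof. by rewrite /y tcE. Qed.

Lemma yx : y <= x /\ x - y <= 1.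
Proof. rewrite /x /y; case: H1 => E; rewrite -E; lia. Qed.

Lemma HS : size S = x.
Proof. rewrite /S size_cat size_nseq size_rev size_map sizeL2; have := yx; lia. Qed.

Lemma mapskS : map (sk BIG) S = nseq (x - y) BIG ++ rev L2.
Proof. by rewrite /S map_cat map_nseq map_rev -map_comp map_id. Qed.

Lemma HS1 : sorted gtn (map (sk BIG) S).
Proof.
rewrite mapskS.
have sr : sorted gtn (rev L2) by rewrite rev_sorted; exact: Lrow_sorted.
have [_] := yx; case: (x - y) => [|[|k]] // _.
rewrite /= path_sortedE; last by move=> a b c /= ba cb; apply: ltn_trans ba.
rewrite sr andbT; apply/allP => m; rewrite mem_rev => /Lrow_N /=.
by rewrite /BIG ltnS.
Qed.

Lemma memS m : (Some m \in S) = (m \in L2).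
Proof.
rewrite /S mem_cat mem_rev mem_nseq andbF /=.
by apply/mapP/idP => [[m' mL [->]] //|mL]; exists m.
Qed.

Lemma memSN : (None \in S) = (0 < x - y).
Proof.
rewrite /S mem_cat mem_rev mem_nseq eqxx andbT.
by case: (x - y) => //=; apply/mapP => [[]].
Qed.

Lemma Hsrc : forall m, Some m \in S -> forall n, n \in L1 -> n < m.
Proof.
move=> m; rewrite memS => mL n nL.
apply: H3.
- have m1 := Lrow_pos mL; by rewrite rcE // -memL // mL.
- have n1 := Lrow_pos nL; by rewrite rcE // -memL // nL.
Qed.

Lemma Hbig : forall m, Some m \in S -> m < BIG.
Proof. by move=> m; rewrite memS => /Lrow_N; rewrite /BIG ltnS. Qed.


Definition ff (u : 'S_x) := f S L1 u.

Lemma mapS_enum : [seq nth None S (val k) | k <- enum 'I_x] = S.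
Proof.
rewrite (map_comp (nth None S) val) val_enum_ord -/(mkseq _ _).
by rewrite -{1}HS mkseq_nth.
Qed.

Lemma mapL_enum : [seq nth 0 L1 (val k) | k <- enum 'I_x] = L1.
Proof.
rewrite (map_comp (nth 0 L1) val) val_enum_ord -/(mkseq _ _).
by rewrite -{1}sizeL1 mkseq_nth.
Qed.

Lemma srcs u : map fst (ff u) = S.
Proof. by rewrite -[RHS]mapS_enum /ff /f -map_comp. Qed.

Lemma tgts u : perm_eq (map snd (ff u)) L1.
Proof.
rewrite /ff /f -map_comp.
have -> : [seq (snd \o g S L1 u) k | k <- enum 'I_x] = [seq nth 0 L1 (val k) | k <- map u (enum 'I_x)].
  by rewrite -[RHS]map_comp.
rewrite -[X in perm_eq _ X]mapL_enum; apply: perm_map.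
apply: uniq_perm; first by rewrite map_inj_uniq ?enum_uniq //; exact: perm_inj.
  exact: enum_uniq.
move=> k; rewrite mem_enum inE; apply/mapP; exists ((u^-1)%g k); first by rewrite mem_enum.
by rewrite permKV.
Qed.

Lemma mem_ff u a : a \in ff u -> a.1 \in S /\ a.2 \in L1.
Proof.
move=> H; split.
- by rewrite -(srcs u); apply: map_f.
- by rewrite -(perm_mem (tgts u)); apply: map_f.
Qed.

Lemma valid_ff u : all valid_arc (ff u).
Proof.
apply/allP => [[[m|] n]] /mem_ff [/= mS nL]; have n1 := Lrow_pos nL => //=.
by rewrite n1 (Hsrc mS nL).
Qed.

Lemma count_src u i : count (fun a : arcm => a.1 == Some i) (ff u) = (i \in L2).
Proof.
have -> : count (fun a : arcm => a.1 == Some i) (ff u) = count (fun o => o == Some i) S.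
  by rewrite -[in RHS](srcs u) [in RHS]count_map.
rewrite /S count_cat count_nseq count_rev count_map /= mul0n add0n.
by rewrite -count_uniq_mem ?Lrow_uniq //; apply: eq_count => m.
Qed.

Lemma count_tgt u i : count (fun a : arcm => a.2 == i) (ff u) = (i \in L1).
Proof.
have -> : count (fun a : arcm => a.2 == i) (ff u) = count (fun n => n == i) (map snd (ff u)).
  by rewrite [in RHS]count_map.
rewrite (seq.permP (tgts u)) -count_uniq_mem ?Lrow_uniq //.
Qed.

Lemma xyE : x = conj alpha 1 /\ y = conj alpha 2.
Proof. by case: HLR => _ _ E1 E2 _; rewrite /x /y E1 E2. Qed.

Lemma boxE i : 1 <= i -> conj beta i - conj gamma i = box i.
Proof. move=> i1; have := H2 i1; rewrite /box; case: ltnP => /= H; lia. Qed.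

Lemma box_split i : 1 <= i -> box i = (Pe 1 i || Pe 2 i) /\ ~~ (Pe 1 i && Pe 2 i).
Proof.
move=> i1; rewrite /Pe; case B: (box i) => //=.
have := entry i1 B; case: (T i (conj beta i)) => [|[|[|k]]] //.
Qed.

Lemma DG u : in_DGamma alpha beta gamma T (ff u).
Proof.
have [xa ya] := xyE.
split; first split.
- exact: valid_ff.
- have -> : count is_arc (ff u) = count (fun o => o != None) S by rewrite -[in RHS](srcs u) [in RHS]count_map.
  rewrite /S count_cat count_nseq count_rev count_map /= mul0n add0n.
  by rewrite (eq_count (a2 := predT)) // count_predT sizeL2 ya.
- have -> : count is_pole (ff u) = count (fun o => o == None) S by rewrite -[in RHS](srcs u) [in RHS]count_map.
  rewrite /S count_cat count_nseq count_rev count_map /= mul1n.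
  by rewrite (eq_count (a2 := pred0)) // count_pred0 addn0 xa ya.
- move=> i i1.
  have -> : count (touches i) (ff u) = (i \in L2) + (i \in L1).
    rewrite -(count_src u) -(count_tgt u) -count_predUI (@eq_in_count _ (predI _ _) pred0) ?count_pred0 ?addn0 //.
    move=> [[m|] n] /(allP (valid_ff u)) /=; last by [].
    case/andP=> _ nm; apply/negP => /andP [/eqP [E1] /eqP E]; move: nm; by rewrite E E1 ltnn.
  rewrite boxE // !memL //.
  have [-> H] := box_split i1; move: H.
  by case: (Pe 1 i); case: (Pe 2 i).
- move=> i i1; rewrite count_src rcE // memL //.
Qed.


Lemma surj D : in_DGamma alpha beta gamma T D -> exists s : 'S_x, perm_eq D (ff s).
Proof.
case=> [[Hval Harc Hpole Htouch] Hlr].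
have [xa ya] := xyE.
have [yx1 yx2] := yx.
rewrite -xa -ya in Hpole.
have valD : forall a, a \in D -> valid_arc a by apply/allP.
have Hsr : forall i, 1 <= i -> count (fun a : arcm => a.1 == Some i) D = Pe 2 i.
  by move=> i i1; rewrite Hlr // rcE.
have Ht : forall i, 1 <= i -> count (touches i) D = box i.
  by move=> i i1; rewrite Htouch // boxE.
have D1 : forall a, a \in D -> a.1 \in S.
  move=> [[m|] n] aD /=.
  - have /= /andP [n0 nm] := valD _ aD.
    have m1 : 1 <= m by lia.
    have : 0 < count (fun a : arcm => a.1 == Some m) D by rewrite -has_count; apply/hasP; exists (Some m, n).
    by rewrite Hsr // -memL // memS lt0b.
  - have : 0 < count is_pole D by rewrite -has_count; apply/hasP; exists (None, n)=> //; rewrite /is_pole eqxx.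
    by rewrite Hpole memSN.
have D3 : forall k : 'I_x, count (fun a : arcm => a.1 == nth None S k) D = 1.
  move=> k; have : nth None S k \in S by rewrite mem_nth // HS.
  case: (nth None S k) => [m|] kS.
  - rewrite memS in kS; have m1 := Lrow_pos kS.
    by rewrite Hsr // -memL // kS.
  - rewrite memSN in kS.
    have -> : count (fun a : arcm => a.1 == None) D = count is_pole D by [].
    rewrite Hpole; lia.
have D4 : forall n, count (fun a : arcm => a.2 == n) D <= 1.
  case=> [|n].
  - rewrite (@eq_in_count _ _ pred0) ?count_pred0 //.
    move=> [[m|] n'] /valD /=; [case/andP => n0 _|move=> n0]; by rewrite eqn0Ngt n0.
  - apply: leq_trans (sub_count (a2 := touches n.+1) _ D) _.
      by move=> a /= /eqP E; rewrite /touches E eqxx orbT.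
    by rewrite Ht // leq_b1.
have D2 : forall a, a \in D -> a.2 \in L1.
  move=> a aD.
  have n1 : 0 < a.2 by case: a aD => [[m|] n] /valD /= //; case/andP.
  have bx : box a.2.
    have : 0 < count (touches a.2) D by rewrite -has_count; apply/hasP; exists a => //; rewrite /touches eqxx orbT.
    by rewrite Ht //; case: (box a.2).
  rewrite memL //; have [Eb _] := box_split n1; rewrite bx in Eb; case/orP: (esym Eb) => [//|P2].
  exfalso.
  have : 0 < count (fun b : arcm => b.1 == Some a.2) D by rewrite Hsr // P2.
  rewrite -has_count => /hasP [b bD /eqP bE].
  have T1 : count (touches a.2) D <= 1 by rewrite Ht // leq_b1.
  have ab : a = b.
    by apply: (count_le1_eq T1 aD bD); rewrite /touches ?bE eqxx ?orbT.
  subst b; have := valD _ aD; move: bE.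
  case: a {aD n1 bx P2 T1 bD Eb} => [[m|] n] //= [->] /andP [_].
  by rewrite ltnn.
pose P (k : 'I_x) := fun a : arcm => a.1 == nth None S k.
have hasPk : forall k, has (P k) D by move=> k; rewrite has_count D3.
pose ak k := nth (None, 0) D (find (P k) D).
have akD : forall k, ak k \in D by move=> k; apply: mem_nth; rewrite -has_find.
have akP : forall k, (ak k).1 = nth None S k by move=> k; apply/eqP; exact: (nth_find _ (hasPk k)).
have wlt : forall k, index (ak k).2 L1 < x by move=> k; rewrite -sizeL1 index_mem D2.
pose w k := Ordinal (wlt k).
have wE : forall k, nth 0 L1 (w k) = (ak k).2 by move=> k; rewrite /= nth_index // D2.
have winj : injective w.
  move=> k l E.
  have E2 : (ak k).2 = (ak l).2 by rewrite -wE E wE.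
  have Eak : ak k = ak l.
    by apply: (count_le1_eq (P := fun a : arcm => a.2 == (ak k).2) (D4 _)) => //=; rewrite E2 eqxx.
  by apply: val_inj; apply: (S_inj HS sizeL1 HS1 (ltn_ord k) (ltn_ord l)); rewrite -!akP Eak.
exists (perm winj).
apply: uniq_perm.
- exact: uniq_from_count D4.
- rewrite /ff /f map_inj_uniq ?enum_uniq // => k l [E _].
  by apply: val_inj; apply: (S_inj HS sizeL1 HS1 (ltn_ord k) (ltn_ord l)).
- move=> a; rewrite /ff /f; apply/idP/idP.
  + move=> aD; have aS := D1 a aD.
    have ix : index a.1 S < x by rewrite -HS index_mem.
    pose k := Ordinal ix.
    have Ek : nth None S k = a.1 by rewrite /= nth_index.
    have -> : a = ak k.
      apply: (count_le1_eq (P := P k) _ aD (akD k)); [by rewrite D3 | by rewrite /P Ek | by rewrite /P akP].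
    apply/mapP; exists k; first by rewrite mem_enum.
    by rewrite /g permE wE -akP -surjective_pairing.
  + case/mapP => k _ ->; rewrite /g permE wE -akP -surjective_pairing.
    exact: akD.
Qed.

End Concrete.


Theorem mainTheorem5 (alpha beta gamma : seq nat) (T : filling) :
  is_partition alpha -> is_partition beta -> is_partition gamma ->
  head 0 alpha <= 2 ->
  is_LR_tableau alpha beta gamma T ->
  (tab_count beta gamma T 2 = tab_count beta gamma T 1 \/
   (tab_count beta gamma T 2).+1 = tab_count beta gamma T 1) ->
  (forall i, 1 <= i -> conj beta i - conj gamma i <= 1) ->
  (forall i j, 0 < row_count beta gamma T 2 j -> 0 < row_count beta gamma T 1 i ->
     i < j) ->
  exists f : 'S_(tab_count beta gamma T 1) -> seq arcm,
    [/\ (forall s, in_DGamma alpha beta gamma T (f s)),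
        (forall D, in_DGamma alpha beta gamma T D -> exists s, perm_eq D (f s)) &
        (forall s t, arc_le (f s) (f t) <-> bruhat_le s t)].
Proof.
move=> Pa Pb Pg ha HLR H1 H2 H3.
exists (@ff beta gamma T); split.
- exact: (DG Pb HLR H1 H2 H3).
- move=> D HD; exact: (surj Pb HLR H1 H2 HD).
- move=> s t; apply: le_iff.
  + exact: (HS Pb H1 H2).
  + exact: (sizeL1 Pb H1 H2).
  + exact: Lrow_sorted.
  + exact: (HS1 Pb H1).
  + exact: (Hsrc Pb H1 H2 H3).
  + exact: Hbig.
Qed.
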